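(* Let $H\in\mathbb{R}^{n\times d}$ have rank $h$, $\Sigma\in\mathbb{R}^{n\times n}$ symmetric positive definite, $\Gamma_0$ the empirical covariance of an initial ensemble, $G_0=\Gamma_0$ and $G_{i+1}=(I+G_iH^\top\Sigma^{-1}H)^{-1}G_i$. Fix $i\ge0$, and let $\tilde w_1,\dots,\tilde w_n$, $r$, $\tilde\delta_{\ell,i}$ be as in the context. For $\ell=1,\dots,r$ let $\tilde u_\ell=\frac1{\tilde\delta_{\ell,i}}G_iH^\top\tilde w_\ell$, and for $\ell=r+1,\dots,h$ let $\tilde u_\ell=H^+\Sigma\tilde w_\ell$. Then for all $\ell\le h$, $G_iH^\top\Sigma^{-1}H\tilde u_\ell=\tilde\delta_{\ell,i}\tilde u_\ell$, and conversely $\tilde w_\ell=\Sigma^{-1}H\tilde u_\ell$.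
   Context: $H^+=(H^\top\Sigma^{-1}H)^\dagger H^\top\Sigma^{-1}$, $\dagger$ the Moore–Penrose pseudoinverse. $\Gamma_0=\frac1{J-1}\sum_j(v_0^{(j)}-\bar v_0)(v_0^{(j)}-\bar v_0)^\top$. Let $C_i=HG_iH^\top$, $r$ the number of positive eigenvalues of the pencil $(C_i,\Sigma)$, and $\tilde w_1,\dots,\tilde w_n$ a $\Sigma$-orthogonal basis of $\mathbb{R}^n$ of generalized eigenvectors, $C_i\tilde w_\ell=\tilde\delta_{\ell,i}\Sigma\tilde w_\ell$, with $\tilde w_1,\dots,\tilde w_r\in\mathsf{Ran}(\Sigma^{-1}H)$ having positive eigenvalues, $\tilde w_{r+1},\dots,\tilde w_h\in\mathsf{Ran}(\Sigma^{-1}H)$ eigenvalue zero, $\tilde w_{h+1},\dots,\tilde w_n\in\mathsf{Ker}(H^\top)$. *)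

(* Defs.v *)
From HB Require Import structures.
From mathcomp Require Import all_boot all_order all_algebra.
Set Implicit Arguments. Unset Strict Implicit. Unset Printing Implicit Defensive.
Import Order.TTheory GRing.Theory Num.Theory.
Local Open Scope ring_scope.

Definition spd (R : realFieldType) (n : nat) (S : 'M[R]_n) : Prop :=
  S^T = S /\ forall x : 'cV[R]_n, x != 0 -> 0 < (x^T *m S *m x) 0 0.

Definition is_mp_pinv (R : realFieldType) (m k : nat)
  (A : 'M[R]_(m, k)) (X : 'M[R]_(k, m)) : Prop :=
  [/\ A *m X *m A = A, X *m A *m X = X,
      (A *m X)^T = A *m X & (X *m A)^T = X *m A].

Definition emp_mean (R : realFieldType) (d J : nat) (v : 'I_J -> 'cV[R]_d)
  : 'cV[R]_d := J%:R^-1 *: \sum_(j < J) v j.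

Definition emp_cov (R : realFieldType) (d J : nat) (v : 'I_J -> 'cV[R]_d)
  : 'M[R]_d :=
  (J%:R - 1)^-1 *: \sum_(j < J) ((v j - emp_mean v) *m (v j - emp_mean v)^T).

Fixpoint Gseq (R : realFieldType) (n d : nat) (H : 'M[R]_(n, d)) (S : 'M[R]_n)
  (G0 : 'M[R]_d) (i : nat) : 'M[R]_d :=
  match i with
  | 0 => G0
  | i'.+1 => let Gi := Gseq H S G0 i' in
             invmx (1%:M + Gi *m H^T *m invmx S *m H) *m Gi
  end.

(* Main.v *)
Require Import Defs.
From HB Require Import structures.
From mathcomp Require Import all_boot all_order all_algebra.
From mathcomp Require Import ring lra.
Import Order.TTheory GRing.Theory Num.Theory.
Local Open Scope ring_scope.

Definition psdm (R : realFieldType) (d : nat) (G : 'M[R]_d) : Prop :=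
  forall x : 'cV[R]_d, 0 <= (x^T *m G *m x) 0 0.

Arguments psdm {R d}.
Lemma sumsq_ge0 (R : realFieldType) (d : nat) (v : 'cV[R]_d) : 0 <= (v^T *m v) 0 0.
Proof.
rewrite mxE; apply: sumr_ge0 => j _; rewrite mxE -expr2; exact: sqr_ge0.
Qed.

Lemma sumsq0 (R : realFieldType) (d : nat) (v : 'cV[R]_d) : (v^T *m v) 0 0 = 0 -> v = 0.
Proof.
rewrite mxE => /eqP; rewrite psumr_eq0; last by move=> j _; rewrite mxE -expr2 sqr_ge0.
move/allP => Hall; apply/matrixP => i j; rewrite (ord1 j) [RHS]mxE.
have := Hall i (mem_index_enum i); rewrite mxE mulf_eq0 orbb => /eqP //.
Qed.

Lemma psd_zero (R : realFieldType) (d : nat) (G : 'M[R]_d) : G^T = G -> psdm G ->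
  forall z : 'cV[R]_d, (z^T *m G *m z) 0 0 = 0 -> G *m z = 0.
Proof.
move=> sG pG z qz; set y := G *m z.
set s := (y^T *m y) 0 0; set c := (y^T *m G *m y) 0 0.
have e1 : forall e : R, ((z - e *: y)^T *m G *m (z - e *: y)) 0 0 = - 2 * e * s + e ^+ 2 * c.
  move=> e.
  have h1 : (z^T *m G *m y) = y^T *m y by rewrite /y trmx_mul sG mulmxA.
  have h2 : (y^T *m G *m z) = y^T *m y by rewrite /y -mulmxA.
  have tB : (z - e *: y)^T = z^T - e *: y^T by apply/matrixP=> i j; rewrite !mxE.
  rewrite tB !mulmxBl !mulmxBr -!scalemxAl -!scalemxAr.
  rewrite h1 h2.
  rewrite /s /c !mxE; rewrite !mxE in qz; rewrite qz; ring.
have cge : 0 <= c by exact: pG.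
have := pG (z - (s / (c + 1)) *: y); rewrite e1 => hh.
have sge : 0 <= s by exact: sumsq_ge0.
have s0 : s = 0.
  have c1 : 0 < c + 1 by lra.
  set e := s / (c + 1) in hh.
  have he : e * (c + 1) = s by rewrite /e divfK // gt_eqF.
  nra.
exact: sumsq0.
Qed.

Arguments psd_zero {R d G}.

Lemma inj_unit (R : realFieldType) (d : nat) (M : 'M[R]_d) :
  (forall x : 'cV[R]_d, M *m x = 0 -> x = 0) -> M \in unitmx.
Proof.
move=> hinj; rewrite -unitmx_tr -row_free_unit -kermx_eq0.
apply/eqP/matrixP => i j; rewrite mxE.
have hk := mulmx_ker M^T.
have : row i (kermx M^T) *m M^T = 0 by rewrite -row_mul hk row0.
move=> /(congr1 trmx); rewrite trmx_mul trmxK trmx0 => /hinj /(congr1 trmx).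
rewrite trmxK trmx0 => /matrixP /(_ 0 j); rewrite !mxE //.
Qed.
Lemma step_psd (R : realFieldType) (d : nat) (G A : 'M[R]_d) : G^T = G -> psdm G -> A^T = A -> psdm A ->
  (invmx (1%:M + G *m A) *m G)^T = invmx (1%:M + G *m A) *m G /\ psdm (invmx (1%:M + G *m A) *m G).
Proof.
move=> sG pG sA pA.
set M := 1%:M + G *m A.
have uM : M \in unitmx.
  apply: inj_unit => x hx.
  have ex : x = - (G *m (A *m x)).
    by apply/eqP; rewrite -addr_eq0 -hx /M mulmxDl mul1mx mulmxA.
  have q : x^T *m A *m x = - ((A *m x)^T *m G *m (A *m x)).
    by rewrite {2}ex trmx_mul sA mulmxN !mulmxA.
  have q0 : (x^T *m A *m x) 0 0 = 0.
    apply/eqP; rewrite eq_le pA andbT q mxE oppr_le0; exact: pG.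
  by rewrite ex (psd_zero sA pA _ q0) mulmx0 oppr0.
have MT : M^T = 1%:M + A *m G by rewrite /M (raddfD (@trmx R d d)) /= trmx1 trmx_mul sG sA.
have uMT : M^T \in unitmx by rewrite unitmx_tr.
have comm : M *m G = G *m M^T.
  by rewrite MT /M mulmxDl mulmxDr mul1mx mulmx1 mulmxA.
have sym : (invmx M *m G)^T = invmx M *m G.
  rewrite trmx_mul sG trmx_inv.
  have hG : G = invmx M *m G *m M^T by rewrite -mulmxA -comm mulmxA mulVmx // mul1mx.
  by rewrite {1}hG -!mulmxA mulmxV // mulmx1.
split=> // x.
set y := (invmx M)^T *m x.
have hx : x = M^T *m y by rewrite /y mulmxA -trmx_mul mulVmx // trmx1 mul1mx.
have hy : x^T *m invmx M = y^T by rewrite /y trmx_mul trmxK.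
rewrite mulmxA hy hx.
have e : y^T *m G *m (M^T *m y) = y^T *m G *m y + (G *m y)^T *m A *m (G *m y).
  by rewrite MT mulmxDl mul1mx mulmxDr [(G *m y)^T]trmx_mul sG !mulmxA.
rewrite e mxE; apply: addr_ge0; [exact: pG | exact: pA].
Qed.

Lemma emp_cov_psd (R : realFieldType) (d J : nat) (v : 'I_J -> 'cV[R]_d) : (1 < J)%N ->
  (emp_cov v)^T = emp_cov v /\ psdm (emp_cov v).
Proof.
move=> hJ; rewrite /emp_cov; set m := emp_mean v.
split.
  have tZ : forall (a : R) (B : 'M[R]_d), (a *: B)^T = a *: B^T.
    by move=> a B; apply/matrixP=> i k; rewrite !mxE.
  have tS : forall (F : 'I_J -> 'M[R]_d), (\sum_j F j)^T = \sum_j (F j)^T.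
    move=> F; apply/matrixP=> i k; rewrite !mxE !summxE; apply: eq_bigr => j _; by rewrite mxE.
  rewrite tZ tS; congr (_ *: _); apply: eq_bigr => j _; by rewrite trmx_mul trmxK.
move=> x; rewrite -scalemxAr -scalemxAl mulmx_sumr mulmx_suml mxE summxE.
apply: mulr_ge0.
  rewrite invr_ge0 subr_ge0 ler1n; exact: ltnW.
apply: sumr_ge0 => j _.
have -> : x^T *m ((v j - m) *m (v j - m)^T) *m x = ((v j - m)^T *m x)^T *m ((v j - m)^T *m x).
  by rewrite trmx_mul trmxK !mulmxA.
exact: sumsq_ge0.
Qed.

Lemma Gseq_psd (R : realFieldType) (n d J : nat) (H : 'M[R]_(n, d)) (S : 'M[R]_n)
  (v : 'I_J -> 'cV[R]_d) (i : nat) : (1 < J)%N -> (invmx S)^T = invmx S -> psdm (invmx S) ->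
  (Gseq H S (emp_cov v) i)^T = Gseq H S (emp_cov v) i /\ psdm (Gseq H S (emp_cov v) i).
Proof.
move=> hJ sSi pSi; elim: i => [|i [sG pG]] /=; first exact: emp_cov_psd.
set A := H^T *m invmx S *m H.
have sA : A^T = A by rewrite /A !trmx_mul trmxK sSi mulmxA.
have pA : psdm A.
  move=> x; rewrite /A.
  have -> : x^T *m (H^T *m invmx S *m H) *m x = (H *m x)^T *m invmx S *m (H *m x).
    by rewrite trmx_mul !mulmxA.
  exact: pSi.
have -> : Gseq H S (emp_cov v) i *m H^T *m invmx S *m H = Gseq H S (emp_cov v) i *m A.
  by rewrite /A !mulmxA.
exact: step_psd.
Qed.

Theorem proposition4p9 (R : realFieldType) (n d h J : nat)
  (H : 'M[R]_(n, d)) (S : 'M[R]_n) (v : 'I_J -> 'cV[R]_d)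
  (Mp : 'M[R]_d)
  (hrank : \rank H = h) (hS : spd S) (hJ : (1 < J)%N)
  (hMp : is_mp_pinv (H^T *m invmx S *m H) Mp)
  (i : nat) (r : nat) (w : 'I_n -> 'cV[R]_n) (delta : 'I_n -> R) :
  let G := Gseq H S (emp_cov v) in
  let C := H *m G i *m H^T in
  (* generalized eigenvectors of the pencil (C_i, S) *)
  (forall l, C *m w l = delta l *: (S *m w l)) ->
  (* S-orthogonal basis of R^n *)
  row_free (\matrix_(l < n) (w l)^T) ->
  (forall k l, k != l -> (w k)^T *m S *m w l = 0) ->
  (* r = number of positive eigenvalues *)
  #|[set l : 'I_n | 0 < delta l]| = r ->
  (r <= h)%N ->
  (forall l : 'I_n, (l < r)%N ->
     0 < delta l /\ exists x : 'cV[R]_d, w l = invmx S *m H *m x) ->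
  (forall l : 'I_n, (r <= l)%N -> (l < h)%N ->
     delta l = 0 /\ exists x : 'cV[R]_d, w l = invmx S *m H *m x) ->
  (forall l : 'I_n, (h <= l)%N -> H^T *m w l = 0) ->
  forall l : 'I_n, (l < h)%N ->
    let u := if (l < r)%N then (delta l)^-1 *: (G i *m H^T *m w l)
             else Mp *m (H^T *m invmx S) *m S *m w l in
    G i *m H^T *m invmx S *m H *m u = delta l *: u /\
    w l = invmx S *m H *m u.
Proof.
move=> G C hw hfree horth hr hrh hpos hzero hker l hl u.
have [sS pS] := hS.
have uS : S \in unitmx.
  apply: inj_unit => x hx; case: (x =P 0) => // /eqP nz.
  by have := pS x nz; rewrite -mulmxA hx mulmx0 mxE ltxx.
have SiS : invmx S *m S = 1%:M := mulVmx uS.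
have SSi : S *m invmx S = 1%:M := mulmxV uS.
have sSi : (invmx S)^T = invmx S by rewrite trmx_inv sS.
have eqq : forall z : 'cV[R]_n,
    (invmx S *m z)^T *m S *m (invmx S *m z) = z^T *m invmx S *m z.
  by move=> z; rewrite trmx_mul sSi -!mulmxA (mulmxA S) SSi mul1mx.
have nzS : forall z : 'cV[R]_n, z != 0 -> invmx S *m z != 0.
  move=> z nz; apply/eqP => h0; move/eqP: nz; apply.
  by rewrite -(mul1mx z) -SSi -mulmxA h0 mulmx0.
have pdSi : forall z : 'cV[R]_n, (z^T *m invmx S *m z) 0 0 = 0 -> z = 0.
  move=> z hz; case: (z =P 0) => // /eqP nz.
  by have := pS _ (nzS z nz); rewrite eqq hz ltxx.
have pSi : psdm (invmx S).
  move=> z; case: (z =P 0) => [->|/eqP nz]; first by rewrite mulmx0 mxE.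
  by apply: ltW; rewrite -eqq; apply: pS; apply: nzS.
have [sG pG] := @Gseq_psd R n d J H S v i hJ sSi pSi.
rewrite /u; case: ifP => hlr.
  have [dpos _] := hpos l hlr.
  have dn0 : delta l != 0 by rewrite gt_eqF.
  have key : H *m (G i *m H^T *m w l) = delta l *: (S *m w l).
    by rewrite !mulmxA; exact: hw.
  have e1 : G i *m H^T *m invmx S *m H *m (G i *m H^T *m w l) = delta l *: (G i *m H^T *m w l).
    rewrite -(mulmxA _ H) key -scalemxAr (mulmxA _ S) -(mulmxA _ (invmx S) S) SiS mulmx1 //.
  split.
    by rewrite -scalemxAr e1 !scalerA mulrC.
  rewrite -scalemxAr -(mulmxA _ H) key -scalemxAr mulmxA SiS mul1mx scalerA mulVf // scale1r //.
have hrl : (r <= l)%N by rewrite leqNgt hlr.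
have [d0 [x hx]] := hzero l hrl hl.
have eu : Mp *m (H^T *m invmx S) *m S *m w l = Mp *m (H^T *m invmx S *m H) *m x.
  by rewrite hx -!mulmxA (mulmxA (invmx S) S) SiS mul1mx.
have kH : H *m (Mp *m (H^T *m invmx S *m H) *m x) = H *m x.
  have [p1 _ _ _] := hMp.
  set y := x - Mp *m (H^T *m invmx S *m H) *m x.
  have Ay : (H^T *m invmx S *m H) *m y = 0.
    by rewrite /y mulmxBr !(mulmxA (H^T *m invmx S *m H)) p1 subrr.
  have : H *m y = 0.
    apply: pdSi.
    have h0 : y^T *m (H^T *m invmx S *m H) *m y = 0 by rewrite -mulmxA Ay mulmx0.
    rewrite !mulmxA in h0.
    by rewrite trmx_mul !mulmxA h0 mxE.
  by move/eqP; rewrite /y mulmxBr subr_eq0 => /eqP.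
have gz : G i *m (H^T *m w l) = 0.
  apply: (psd_zero sG pG).
  have -> : (H^T *m w l)^T *m G i *m (H^T *m w l) = (w l)^T *m (C *m w l).
    by rewrite trmx_mul trmxK !mulmxA.
  by rewrite hw d0 scale0r mulmx0 mxE.
rewrite eu d0 scale0r; split.
  by rewrite -(mulmxA _ H) kH -!mulmxA (mulmxA (invmx S)) -hx gz.
by rewrite -(mulmxA _ H) kH mulmxA.
Qed.
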